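(* Let $X_1,\dots,X_n,R_1,\dots,R_n$ be mutually independent random variables, all real-valued or all taking values in $\mathbb{Z}_p$ (addition mod $p$), such that $\mathrm{I}(X_i;X_i+R_i)=0$ for every $i$. Then for every $i$, $$\mathrm{I}\Big(X_i;\ X_1+R_1,\dots,X_n+R_n,\ \textstyle\sum_{j=1}^n R_j\Big)=\mathrm{I}\Big(X_i;\ \textstyle\sum_{j=1}^n X_j\Big).$$
   Context: $\mathrm{I}$ denotes mutual information. *)

(* Defs.v *)
From HB Require Import structures.
From mathcomp Require Import all_boot all_order all_algebra.
From mathcomp Require Import all_classical all_reals all_analysis.
Set Implicit Arguments. Unset Strict Implicit. Unset Printing Implicit Defensive.
Import Order.TTheory GRing.Theory Num.Theory.
Local Open Scope classical_set_scope.
Local Open Scope ring_scope.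

(* Random variables with values in a type V carrying a sigma-algebra mV
   (Borel sets for R, all subsets for Z_p).  *)

Definition sigmaRV {T V : Type} (mV : set (set V)) (X : T -> V) : set (set T) :=
  [set X @^-1` B | B in mV].

(* sigma-algebra generated by a family of random variables (the joint variable) *)
Definition sigmaFam {T V I : Type} (mV : set (set V)) (Z : I -> T -> V) : set (set T) :=
  <<s \bigcup_(i in [set: I]) sigmaRV mV (Z i) >>.

Definition rv_meas {d} {T : measurableType d} {V : Type} (mV : set (set V))
  (X : T -> V) : Prop := forall B, mV B -> measurable (X @^-1` B).

Definition mutually_indep {d} {T : measurableType d} {R : realType}
  (P : probability T R) {V : Type} (mV : set (set V)) {I : finType}
  (Z : I -> T -> V) : Prop :=
  forall (J : {set I}) (B : I -> set V), (forall i, mV (B i)) ->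
    fine (P (\bigcap_(i in [set i | i \in J]) (Z i @^-1` B i))) =
    \prod_(i in J) fine (P (Z i @^-1` B i)).

Definition fpartition {T : Type} (F : set (set T)) (m : nat) (A : 'I_m -> set T) : Prop :=
  (forall k, F (A k)) /\ (forall k l, k != l -> A k `&` A l = set0) /\
  \bigcup_(k in [set: 'I_m]) A k = setT.

Definition mi_term {R : realType} (pab pa pb : R) : R :=
  if pab == 0 then 0 else pab * ln (pab / (pa * pb)).

(* Mutual information between two sub-sigma-algebras (Gelfand-Yaglom-Dobrushin /
   Pinsker): supremum over finite measurable partitions. *)
Definition MI {d} {T : measurableType d} {R : realType} (P : probability T R)
  (F G : set (set T)) : \bar R :=
  ereal_sup [set r : \bar R | exists (m m' : nat) (A : 'I_m -> set T) (B : 'I_m' -> set T),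
     [/\ fpartition F A, fpartition G B &
       r = (\sum_(k < m) \sum_(l < m')
         mi_term (fine (P (A k `&` B l))) (fine (P (A k))) (fine (P (B l))))%:E]].

(* Main.v *)
Require Import Defs.
From HB Require Import structures.
From mathcomp Require Import all_boot all_order all_algebra.
From mathcomp Require Import all_classical all_reals all_analysis.
From mathcomp Require Import lra ring.
Import Order.TTheory GRing.Theory Num.Theory.
Local Open Scope classical_set_scope.
Local Open Scope ring_scope.
Set Implicit Arguments. Unset Strict Implicit. Unset Printing Implicit Defensive.

Section Prob.
Context {R : realType} {d : measure_display} {T : measurableType d}
  (P : probability T R).

Definition pr (A : set T) : R := fine (P A).

Lemma prE A : measurable A -> P A = (pr A)%:E.
Proof. by move=> mA; rewrite /pr fineK // (@fin_num_measure _ _ _ P A mA). Qed.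

Lemma pr_ge0 A : measurable A -> 0 <= pr A.
Proof. by move=> mA; rewrite -lee_fin -prE // measure_ge0. Qed.

Lemma pr_le1 A : measurable A -> pr A <= 1.
Proof. by move=> mA; rewrite -lee_fin -prE // probability_le1. Qed.

Lemma prT : pr setT = 1.
Proof. by rewrite /pr probability_setT. Qed.

Lemma pr0 : pr set0 = 0.
Proof. by rewrite /pr measure0. Qed.

Lemma prU A B : measurable A -> measurable B -> A `&` B = set0 ->
  pr (A `|` B) = pr A + pr B.
Proof.
move=> mA mB AB; apply/eqP; rewrite -eqe -prE; last exact: measurableU.
by rewrite measureU // EFinD -!prE.
Qed.

Lemma pr_le A B : measurable A -> measurable B -> A `<=` B -> pr A <= pr B.
Proof. by move=> mA mB AB; rewrite -lee_fin -!prE // le_measure // inE. Qed.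

Lemma pr_split A B : measurable A -> measurable B ->
  pr A = pr (A `&` B) + pr (A `&` ~` B).
Proof.
move=> mA mB; rewrite -prU; [|exact: measurableI|apply: measurableI => //; exact: measurableC|].
  by rewrite -setIUr setUv setIT.
by rewrite setIACA setICr setI0.
Qed.

Lemma prC A : measurable A -> pr (~` A) = 1 - pr A.
Proof. by move=> mA; rewrite -prT (@pr_split setT A measurableT mA) //= !setTI; lra. Qed.

Lemma pr_fibers (U : finType) (g : T -> U) (E : set T) :
  measurable E -> (forall u, measurable (g @^-1` [set u])) ->
  forall (s : seq U), uniq s ->
  pr (E `&` g @^-1` [set u | u \in s]) = \sum_(u <- s) pr (E `&` g @^-1` [set u]).
Proof.
move=> mE mg; elim=> [|a s IH] /=.
  move=> _; rewrite big_nil.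
  have -> : E `&` g @^-1` [set u | u \in [::]] = set0.
    by apply/seteqP; split=> x //= [].
  exact: pr0.
move=> /andP[as_ us]; rewrite big_cons -IH //.
have -> : E `&` g @^-1` [set u | u \in a :: s] =
  (E `&` g @^-1` [set a]) `|` (E `&` g @^-1` [set u | u \in s]).
  apply/seteqP; split=> x /=.
    by move=> [Ex]; rewrite inE => /orP[/eqP ->|xs]; [left|right].
  by move=> [[Ex ->]|[Ex xs]]; split=> //; rewrite inE ?eqxx ?xs ?orbT.
have mfs : measurable (g @^-1` [set u | u \in s]).
  have -> : g @^-1` [set u | u \in s] = \bigcup_(u in [set u | u \in s]) g @^-1` [set u].
    by apply/seteqP; split=> x /=; [move=> h; exists (g x)|move=> [u h ->]].
  apply: fin_bigcup_measurable => // ; exact: finite_finset.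
apply: prU; [exact: measurableI|exact: measurableI|].
apply/seteqP; split=> x //= [[_ ->]] [_]; by rewrite (negbTE as_).
Qed.

Lemma pr_pred (U : finType) (g : T -> U) (E : set T) (C : pred U) :
  measurable E -> (forall u, measurable (g @^-1` [set u])) ->
  pr (E `&` g @^-1` [set u | C u]) = \sum_(u | C u) pr (E `&` g @^-1` [set u]).
Proof.
move=> mE mg; rewrite -big_filter -(pr_fibers mE mg); last by rewrite filter_uniq // index_enum_uniq.
congr pr; apply/seteqP; split=> x /= [Ex h]; split=> //.
  by rewrite mem_filter h mem_index_enum.
by move: h; rewrite mem_filter => /andP[].
Qed.

Lemma pr_sum1 (U : finType) (g : T -> U) :
  (forall u, measurable (g @^-1` [set u])) ->
  \sum_u pr (g @^-1` [set u]) = 1.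
Proof.
move=> mg; have := @pr_pred U g setT xpredT measurableT mg.
under eq_bigr do rewrite setTI.
move=> <-; rewrite -prT; congr pr; apply/seteqP; split=> x //.
Qed.

End Prob.

Section Real.
Context {R : realType}.

Lemma ln_le_sub1 (x : R) : 0 < x -> ln x <= x - 1.
Proof. move=> x0; have := @le_ln1Dx R (x - 1); rewrite addrCA subrr addr0; apply; lra. Qed.

Lemma ln_eq_sub1 (x : R) : 0 < x -> ln x = x - 1 -> x = 1.
Proof.
move=> x0 h; set s := Num.sqrt x.
have s0 : 0 < s by rewrite sqrtr_gt0.
have xs : x = s * s by rewrite -expr2 sqr_sqrtr // ltW.
have : ln x <= 2 * (s - 1).
  rewrite xs lnM ?posrE //; have := ln_le_sub1 s0; lra.
rewrite h xs => hh.
have s1 : s = 1 by nra.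
by rewrite xs s1 mulr1 in h *.
Qed.

Definition kl (a b : R) : R := if a == 0 then 0 else a * ln (a / b).

Lemma mi_termE (a q r : R) : mi_term a q r = kl a (q * r).
Proof. by []. Qed.

Lemma kl_ge (a b : R) : 0 <= a -> 0 <= b -> (0 < a -> 0 < b) -> a - b <= kl a b.
Proof.
move=> a0 b0 ab; rewrite /kl; have [->|an0] := eqVneq a 0; first lra.
have ap : 0 < a by rewrite lt_def an0.
have bp := ab ap.
have -> : a / b = (b / a)^-1 by rewrite invf_div.
rewrite lnV ?posrE ?divr_gt0 //.
have := ln_le_sub1 (divr_gt0 bp ap).
rewrite -(ler_pM2l ap) mulrBr mulrCA divff ?mulr1 ?gt_eqF //; lra.
Qed.

Lemma kl_eq (a b : R) : 0 <= a -> 0 <= b -> (0 < a -> 0 < b) -> kl a b = a - b -> a = b.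
Proof.
move=> a0 b0 ab; rewrite /kl; have [->|an0] := eqVneq a 0; first lra.
have ap : 0 < a by rewrite lt_def an0.
have bp := ab ap.
have -> : a / b = (b / a)^-1 by rewrite invf_div.
rewrite lnV ?posrE ?divr_gt0 // => h.
have e : a * ln (b / a) = a * (b / a - 1).
  rewrite mulrBr mulrCA divff ?gt_eqF // !mulr1; lra.
move: e => /(mulfI (lt0r_neq0 ap)) /ln_eq_sub1 => /(_ (divr_gt0 bp ap)) e.
by rewrite -[b](mulfVK (lt0r_neq0 ap)) e mul1r.
Qed.

Lemma gibbs (I : finType) (a b : I -> R) :
  (forall i, 0 <= a i) -> (forall i, 0 <= b i) -> (forall i, 0 < a i -> 0 < b i) ->
  \sum_i a i = 1 -> \sum_i b i = 1 -> \sum_i kl (a i) (b i) <= 0 ->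
  forall i, a i = b i.
Proof.
move=> a0 b0 ab sa sb sk i.
have f0 : forall j, 0 <= kl (a j) (b j) - (a j - b j).
  move=> j; rewrite subr_ge0; apply: kl_ge; solve [apply: a0|apply: b0|apply: ab].
have : \sum_j (kl (a j) (b j) - (a j - b j)) = 0.
  apply/eqP; rewrite eq_le; apply/andP; split; last by apply: sumr_ge0 => j _.
  by rewrite sumrB sumrB sa sb subrr subr0.
move/psumr_eq0P => /(_ (fun j _ => f0 j) i isT) /eqP; rewrite subr_eq0 => /eqP.
move=> e; apply: (kl_eq _ _ _ e); solve [apply: a0|apply: b0|apply: ab].
Qed.

End Real.

Section LS.
Context {R : realType}.
Lemma logsum (I : finType) (Pr : pred I) (a b : I -> R) (q : R) :
  (forall i, 0 <= a i) -> (forall i, a i <= b i) -> (forall i, a i <= q) ->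
  mi_term (\sum_(i | Pr i) a i) q (\sum_(i | Pr i) b i) <=
  \sum_(i | Pr i) mi_term (a i) q (b i).
Proof.
move=> a0 ab aq; set A := \sum_(i | Pr i) a i; set B := \sum_(i | Pr i) b i.
have A0 : 0 <= A by apply: sumr_ge0.
have [Ae|An0] := eqVneq A 0.
  have ai0 : forall i, Pr i -> a i = 0.
    by move=> i; apply: psumr_eq0P => // j _.
  rewrite /mi_term Ae eqxx big1 // => i Pi; by rewrite ai0 // eqxx.
have Ap : 0 < A by rewrite lt_def An0.
have AB : A <= B by apply: ler_sum => i _.
have Bp : 0 < B by apply: lt_le_trans AB.
have [i Pi ai] : exists2 i, Pr i & 0 < a i.
  have An0' : A <> 0 by apply/eqP.
  have := psumr_neq0P (fun i _ => a0 i) An0' => -[i /andP[]]; by exists i.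
have qp : 0 < q by apply: lt_le_trans (aq i).
set c := A / B.
have cp : 0 < c by apply: divr_gt0.
have key : forall j, a j * ln (A / (q * B)) + (a j - c * b j) <= mi_term (a j) q (b j).
  move=> j; rewrite mi_termE.
  have [aj0|ajn0] := eqVneq (a j) 0.
    rewrite /kl aj0 eqxx mul0r add0r sub0r oppr_le0.
    by apply: mulr_ge0; [exact: ltW | rewrite -aj0; apply: ab].
  have ajp : 0 < a j by rewrite lt_def ajn0 a0.
  have bjp : 0 < b j by apply: lt_le_trans (ab j).
  have := @kl_ge R (a j) (c * b j) (ltW ajp) (ltW (mulr_gt0 cp bjp)) (fun _ => mulr_gt0 cp bjp).
  rewrite /kl (negbTE ajn0).
  have -> : a j / (c * b j) = (a j / (q * b j)) / (A / (q * B)).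
    rewrite /c; field; rewrite ?lt0r_neq0 //; apply/andP; split; apply/andP; split; apply: lt0r_neq0 => //.
  rewrite ln_div ?posrE; first (rewrite mulrBr; lra).
    by apply: divr_gt0 => //; apply: mulr_gt0.
  by apply: divr_gt0 => //; apply: mulr_gt0.
have := @ler_sum _ _ (index_enum I) Pr _ _ (fun j _ => key j).
rewrite big_split /= -mulr_suml big_split /= -/A sumrN -mulr_sumr -/B.
rewrite /c mulfVK ?lt0r_neq0 // subrr addr0 => h.
by rewrite /mi_term (negbTE An0).
Qed.
End LS.

Section MIsec.
Context {R : realType} {d : measure_display} {T : measurableType d}
  (P : probability T R).

Definition psum (m m' : nat) (A : 'I_m -> set T) (B : 'I_m' -> set T) : R :=
  \sum_(k < m) \sum_(l < m')
     mi_term (pr P (A k `&` B l)) (pr P (A k)) (pr P (B l)).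

Lemma MI_ub (F G : set (set T)) m m' (A : 'I_m -> set T) (B : 'I_m' -> set T) :
  fpartition F A -> fpartition G B -> ((psum A B)%:E <= MI P F G)%E.
Proof. by move=> hA hB; apply: ereal_sup_ubound; exists m, m', A, B. Qed.

Lemma MI_le (F G : set (set T)) (x : R) :
  (forall m m' (A : 'I_m -> set T) (B : 'I_m' -> set T),
     fpartition F A -> fpartition G B -> psum A B <= x) ->
  (MI P F G <= x%:E)%E.
Proof.
move=> h; apply: ge_ereal_sup => r [m [m' [A [B [hA hB ->]]]]].
by rewrite lee_fin; exact: h.
Qed.

Definition two (A : set T) (k : 'I_2) : set T := if val k == 0%N then A else ~` A.

Lemma fpart_two (F : set (set T)) A : F A -> F (~` A) -> fpartition F (two A).
Proof.
move=> FA FCA; split; [|split].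
- by move=> k; rewrite /two; case: ifP.
- move=> k l; case: k => -[|[|//]] ?; case: l => -[|[|//]] ? //= _.
    by rewrite /two /= setICr.
  by rewrite /two /= setICl.
- apply/seteqP; split=> x // _.
  have [Ax|nAx] := pselect (A x).
    by exists ord0.
  by exists (lift ord0 ord0).
Qed.

Lemma MI0_indep (F G : set (set T)) A C : MI P F G = 0%E ->
  (forall S, F S -> measurable S) -> (forall S, G S -> measurable S) ->
  F A -> F (~` A) -> G C -> G (~` C) ->
  pr P (A `&` C) = pr P A * pr P C.
Proof.
move=> h0 mF mG FA FCA GC GCC.
have := MI_ub (fpart_two FA FCA) (fpart_two GC GCC); rewrite h0 lee_fin => hs.
have mA := mF _ FA; have mC := mG _ GC.
have mCA := mF _ FCA; have mCC := mG _ GCC.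
have mtwoA : forall k, measurable (two A k) by move=> k; rewrite /two; case: ifP.
have mtwoC : forall k, measurable (two C k) by move=> k; rewrite /two; case: ifP.
pose a (p : 'I_2 * 'I_2) := pr P (two A p.1 `&` two C p.2).
pose b (p : 'I_2 * 'I_2) := pr P (two A p.1) * pr P (two C p.2).
have := @gibbs R _ a b.
have -> : (\sum_i kl (a i) (b i)) = psum (two A) (two C).
  by rewrite /psum pair_bigA.
move=> /(_ _ _ _ _ _ hs (ord0, ord0)); apply.
- by move=> p; apply: pr_ge0; apply: measurableI.
- by move=> p; apply: mulr_ge0; apply: pr_ge0.
- move=> p ap; apply: mulr_gt0.
    apply: lt_le_trans ap _; apply: pr_le; [exact: measurableI|exact: mtwoA|exact: subIsetl].
  apply: lt_le_trans ap _; apply: pr_le; [exact: measurableI|exact: mtwoC|exact: subIsetr].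
- have -> : \sum_i a i = \sum_k \sum_l a (k, l) by rewrite pair_bigA.
  rewrite !big_ord_recl !big_ord0 /= /a /two /= !addr0.
  rewrite -(pr_split P mA mC) -(pr_split P mCA mC) prC //; lra.
- have -> : \sum_i b i = \sum_k \sum_l b (k, l) by rewrite pair_bigA.
  rewrite !big_ord_recl !big_ord0 /= /b /two /= !addr0.
  rewrite !prC //; lra.
Qed.

Lemma fpart_one (F : set (set T)) : F setT -> fpartition F (fun _ : 'I_1 => setT).
Proof.
move=> FT; split; [by []|split].
- by move=> k l; rewrite (ord1 k) (ord1 l) eqxx.
- by apply/seteqP; split=> x // _; exists ord0.
Qed.

Lemma MI_trivial (F G : set (set T)) :
  (forall S, F S -> measurable S /\ (pr P S = 0 \/ pr P S = 1)) ->
  (forall S, G S -> measurable S) -> F setT -> G setT ->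
  MI P F G = 0%E.
Proof.
move=> hF mG FT GT; apply/eqP; rewrite eq_le; apply/andP; split.
  apply: MI_le => m m' A B hA hB; rewrite /psum big1 // => k _; rewrite big1 // => l _.
  have [mAk [pA|pA]] := hF _ (hA.1 k); have mBl := mG _ (hB.1 l).
    have e : pr P (A k `&` B l) = 0.
      apply/eqP; rewrite eq_le pr_ge0 ?andbT; last exact: measurableI.
      rewrite -pA; apply: pr_le; [exact: measurableI|exact: mAk|exact: subIsetl].
    by rewrite /mi_term e eqxx.
  have e : pr P (A k `&` B l) = pr P (B l).
    rewrite (pr_split P mBl mAk) setIC.
    have -> : pr P (B l `&` ~` A k) = 0.
      apply/eqP; rewrite eq_le pr_ge0 ?andbT; last by apply: measurableI => //; exact: measurableC.
      have := prC P mAk; rewrite pA subrr => <-; apply: pr_le; [|exact: measurableC|exact: subIsetr].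
      by apply: measurableI => //; exact: measurableC.
    by rewrite addr0.
  rewrite /mi_term e pA mul1r; case: ifP => // /negbT hb.
  by rewrite divff // ln1 mulr0.
have := MI_ub (fpart_one FT) (fpart_one GT); rewrite /psum !big_ord1 setTI prT /mi_term.
by rewrite oner_eq0 mulr1 divr1 ln1 mulr0.
Qed.

End MIsec.

Section RealSets.
Context {R : realType}.
Lemma meas_le (a : R) : measurable [set r : R | r <= a].
Proof.
have -> : [set r : R | r <= a] = `]-oo, a]%classic.
  by apply/seteqP; split=> r /=; rewrite in_itv.
exact: measurable_itv.
Qed.
Lemma meas_ge (a : R) : measurable [set r : R | a <= r].
Proof.
have -> : [set r : R | a <= r] = `[a, +oo[%classic.
  by apply/seteqP; split=> r /=; rewrite in_itv /= andbT.
exact: measurable_itv.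
Qed.
Lemma meas_gt (a : R) : measurable [set r : R | a < r].
Proof.
have -> : [set r : R | a < r] = `]a, +oo[%classic.
  by apply/seteqP; split=> r /=; rewrite in_itv /= andbT.
exact: measurable_itv.
Qed.
Lemma meas_lt (a : R) : measurable [set r : R | r < a].
Proof.
have -> : [set r : R | r < a] = `]-oo, a[%classic.
  by apply/seteqP; split=> r /=; rewrite in_itv.
exact: measurable_itv.
Qed.

Lemma nat_gt (x : R) : exists k : nat, x < k%:R.
Proof.
case: (leP 0 x) => x0; first by exists (Num.Def.archi_bound x); apply: archi_boundP.
by exists 0%N.
Qed.

Lemma inv_small (e : R) : 0 < e -> exists k : nat, (k.+1%:R)^-1 < e.
Proof.
move=> e0; have [k hk] := nat_gt e^-1; exists k.
rewrite invf_plt ?posrE //; apply: lt_trans hk _; rewrite ltr_nat; exact: ltnSn.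
Qed.
End RealSets.

Section NullCover.
Context {R : realType} {d : measure_display} {T : measurableType d}
  (P : probability T R).

Lemma null_cover (E : set T) (F : nat -> set T) : measurable E ->
  (forall k, measurable (F k)) -> (forall k, pr P (F k) = 0) ->
  E `<=` \bigcup_k F k -> pr P E = 0.
Proof.
move=> mE mF F0 sub; have := measure_sigma_subadditive P mF mE sub.
rewrite eseries0; last by move=> i _ _ /=; rewrite (prE P (mF i)) F0.
rewrite /= (prE P mE) lee_fin => h; apply/eqP; by rewrite eq_le h pr_ge0.
Qed.

Lemma pr_Ule A B : measurable A -> measurable B -> pr P (A `|` B) <= pr P A + pr P B.
Proof.
move=> mA mB; rewrite -lee_fin EFinD -!prE //; last exact: measurableU.
exact: measureU2.
Qed.
End NullCover.

Section Degen.
Context {R : realType} {d : measure_display} {T : measurableType d}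
  (P : probability T R) (X Rn : T -> R).
Hypothesis mX : rv_meas (@measurable _ R) X.
Hypothesis mR : rv_meas (@measurable _ R) Rn.
Hypothesis mY : rv_meas (@measurable _ R) (fun w => X w + Rn w).
Hypothesis iXR : forall B C, measurable B -> measurable C ->
  pr P (X @^-1` B `&` Rn @^-1` C) = pr P (X @^-1` B) * pr P (Rn @^-1` C).
Hypothesis iXY : forall B C, measurable B -> measurable C ->
  pr P (X @^-1` B `&` (fun w => X w + Rn w) @^-1` C) =
  pr P (X @^-1` B) * pr P ((fun w => X w + Rn w) @^-1` C).

Local Notation pr := (pr P).
Local Notation Y := (fun w => X w + Rn w).

Lemma step1 (a b : R) : a < b ->
  pr (X @^-1` [set r | r <= a]) = 0 \/ pr (X @^-1` [set r | b < r]) = 0.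
Proof.
move=> ab.
have mXa := mX (meas_le a); have mXb := mX (meas_gt b).
have [hA|hA] := eqVneq (pr (X @^-1` [set r | r <= a])) 0; first by left.
have [hB|hB] := eqVneq (pr (X @^-1` [set r | b < r])) 0; first by right.
exfalso.
have pA : 0 < pr (X @^-1` [set r | r <= a]) by rewrite lt_def hA pr_ge0.
have pB : 0 < pr (X @^-1` [set r | b < r]) by rewrite lt_def hB pr_ge0.
set dd := b - a.
have dd0 : 0 < dd by rewrite /dd subr_gt0.
pose G u := pr (Rn @^-1` [set r | u <= r]).
have Gle : forall u, G u <= G (u + dd).
  move=> u.
  have h1 : pr (X @^-1` [set r | b < r]) * G u <=
            pr (X @^-1` [set r | b < r]) * pr (Y @^-1` [set r | u + b <= r]).
    rewrite /G -(iXR (meas_gt b) (meas_ge u)) -(iXY (meas_gt b) (meas_ge (u + b))).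
    apply: pr_le; [apply: measurableI => //; exact: mR (meas_ge _)|
                   apply: measurableI => //; exact: mY (meas_ge _)|].
    move=> x /= [hx hr]; split => //; lra.
  have h2 : pr (X @^-1` [set r | r <= a]) * pr (Y @^-1` [set r | u + b <= r]) <=
            pr (X @^-1` [set r | r <= a]) * G (u + dd).
    rewrite /G -(iXR (meas_le a) (meas_ge (u + dd))) -(iXY (meas_le a) (meas_ge (u + b))).
    apply: pr_le; [apply: measurableI => //; exact: mY (meas_ge _)|
                   apply: measurableI => //; exact: mR (meas_ge _)|].
    move=> x /= [hx hr]; split => //; rewrite /dd; lra.
  rewrite ler_pM2l // in h1; rewrite ler_pM2l // in h2.
  exact: le_trans h1 h2.
pose Iv u := Rn @^-1` [set r | u <= r] `&` ~` Rn @^-1` [set r | u + dd <= r].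
have mIv : forall u, measurable (Iv u).
  by move=> u; apply: measurableI; [exact: mR (meas_ge _)|apply: measurableC; exact: mR (meas_ge _)].
have Iv0 : forall u, pr (Iv u) = 0.
  move=> u; have := pr_split P (mR (meas_ge u)) (mR (meas_ge (u + dd))).
  have -> : Rn @^-1` [set r | u <= r] `&` Rn @^-1` [set r | u + dd <= r] =
            Rn @^-1` [set r | u + dd <= r].
    apply/seteqP; split=> x /=; [by case|move=> h; split => //; lra].
  rewrite -/(Iv u) -/(G u) -/(G (u + dd)) => e.
  have := Gle u; have := pr_ge0 P (mIv u); lra.
have : pr setT = 0.
  apply: (@null_cover _ _ _ P _ (fun k : nat => Iv (k%:R * dd) `|` Iv (- (k.+1%:R) * dd))).
  - exact: measurableT.
  - by move=> k; apply: measurableU.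
  - move=> k; apply/eqP; rewrite eq_le pr_ge0 ?andbT; last exact: measurableU.
    by have := pr_Ule P (mIv (k%:R * dd)) (mIv (- (k.+1%:R) * dd)); rewrite !Iv0 addr0.
  - move=> x _.
    have := floor_itv (Rn x / dd); case: (Num.floor (Rn x / dd)) => k.
      rewrite intrD -!pmulrn => /andP[h1 h2].
      rewrite ler_pdivlMr // in h1; rewrite ltr_pdivrMr // in h2.
      exists k => //; left; rewrite /Iv /=; split => //; nra.
    rewrite intrD NegzE intrN -!pmulrn => /andP[h1 h2].
    rewrite ler_pdivlMr // in h1; rewrite ltr_pdivrMr // in h2.
    rewrite -natr1 in h1 h2.
    exists k => //; right; rewrite /Iv /=; split => //; nra.
by rewrite prT; apply/eqP; rewrite oner_eq0.
Qed.

Lemma step2 : exists c, pr (X @^-1` [set r | r < c]) = 0 /\ pr (X @^-1` [set r | c < r]) = 0.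
Proof.
set S := [set a : R | pr (X @^-1` [set r | r <= a]) = 0].
have Sdown : forall a s, S s -> a <= s -> S a.
  move=> a s Ss las; rewrite /S /=; apply/eqP; rewrite eq_le pr_ge0 ?andbT; last exact: mX (meas_le _).
  rewrite -Ss; apply: pr_le; [exact: mX (meas_le _)|exact: mX (meas_le _)|].
  by move=> x /= h; apply: le_trans las.
have prT0 : pr setT <> 0 by rewrite prT; apply/eqP; rewrite oner_eq0.
have Sne : exists a, S a.
  case: (pselect (exists a, S a)) => // nS; exfalso; apply: prT0.
  have hb : forall b, pr (X @^-1` [set r | b < r]) = 0.
    move=> b; have lb : b - 1 < b by lra.
    case: (step1 lb); last by [].
    by move=> h; exfalso; apply: nS; exists (b - 1).
  apply: (@null_cover _ _ _ P _ (fun k : nat => X @^-1` [set r | - (k%:R) < r])) => //.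
  - by move=> k; exact: mX (meas_gt _).
  - move=> x _; have [k hk] := nat_gt (- X x); exists k => //=; lra.
have Sub : has_ubound S.
  case: (pselect (has_ubound S)) => // nub; exfalso; apply: prT0.
  have hall : forall a, S a.
    move=> a; apply: contra_notP nub => nSa; exists a => s Ss.
    rewrite leNgt; apply/negP => as_; apply: nSa; apply: Sdown Ss _; exact: ltW.
  apply: (@null_cover _ _ _ P _ (fun k : nat => X @^-1` [set r | r <= k%:R])) => //.
  - by move=> k; exact: mX (meas_le _).
  - by move=> k; apply: hall.
  - move=> x _; have [k hk] := nat_gt (X x); exists k => //=; exact: ltW.
have hS : has_sup S by split => //; case: Sne => a Sa; exists a.
set c := sup S; exists c; split.
- apply: (@null_cover _ _ _ P _ (fun k : nat => X @^-1` [set r | r <= c - (k.+1%:R)^-1])).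
  + exact: mX (meas_lt _).
  + by move=> k; exact: mX (meas_le _).
  + move=> k; have [s Ss hs] := @sup_adherent R S (k.+1%:R)^-1 ltac:(by rewrite invr_gt0) hS.
    apply: Sdown Ss _; exact: ltW.
  + move=> x /= hx; have [k hk] := inv_small (ltac:(by rewrite subr_gt0) : 0 < c - X x).
    exists k => //=; rewrite lerBrDr addrC -lerBrDr; exact: ltW.
- apply: (@null_cover _ _ _ P _ (fun k : nat => X @^-1` [set r | c + (k.+1%:R)^-1 < r])).
  + exact: mX (meas_gt _).
  + by move=> k; exact: mX (meas_gt _).
  + move=> k; have lt12 : c + (k.+2%:R)^-1 < c + (k.+1%:R)^-1.
      rewrite ltrD2l ltf_pV2 ?posrE ?ltr0n // ltr_nat; exact: ltnSn.
    case: (step1 lt12) => // h; exfalso.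
    have : c + (k.+2%:R)^-1 <= c by apply: sup_upper_bound.
    by rewrite gerDl leNgt invr_gt0 ltr0n.
  + move=> x /= hx; have [k hk] := inv_small (ltac:(by rewrite subr_gt0) : 0 < X x - c).
    by exists k => //=; rewrite -ltrBrDl.
Qed.

Lemma X_trivial B : measurable B -> pr (X @^-1` B) = 0 \/ pr (X @^-1` B) = 1.
Proof.
move=> mB; have [c [h1 h2]] := step2.
have mN : measurable (X @^-1` (~` [set c])) by apply: mX; apply: measurableC; exact: measurable_set1.
have N0 : pr (X @^-1` (~` [set c])) = 0.
  apply/eqP; rewrite eq_le pr_ge0 // andbT.
  have := pr_Ule P (mX (meas_lt c)) (mX (meas_gt c)); rewrite h1 h2 addr0; apply: le_trans.
  apply: pr_le => //; first by apply: measurableU; [exact: mX (meas_lt _)|exact: mX (meas_gt _)].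
  move=> x /= hx; have [] := ltgtP (X x) c; [by left|by right|by move=> e].
have mXB := mX mB.
case: (pselect (B c)) => Bc; [right|left].
  have : pr (~` (X @^-1` B)) = 0.
    apply/eqP; rewrite eq_le pr_ge0 ?andbT; last exact: measurableC.
    rewrite -N0; apply: pr_le => //; first exact: measurableC.
    by move=> x /= hx e; apply: hx; rewrite e.
  rewrite prC //; lra.
apply/eqP; rewrite eq_le pr_ge0 // andbT -N0; apply: pr_le => //.
by move=> x /= hx e; apply: Bc; rewrite -e.
Qed.

End Degen.

Section Gen.
Context {R : realType} {d : measure_display} {T : measurableType d}
  (P : probability T R).

Lemma indep_all {V : Type} (mV : set (set V)) {I : finType} (Z : I -> T -> V)
  (B : I -> set V) : mutually_indep P mV Z -> (forall i, mV (B i)) ->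
  pr P (fun w => forall i, B i (Z i w)) = \prod_i pr P (Z i @^-1` B i).
Proof.
move=> h hB; have := h [set: I]%SET B hB.
have -> : \bigcap_(i in [set i | i \in [set: I]%SET]) Z i @^-1` B i = (fun w => forall i, B i (Z i w)).
  by apply/seteqP; split=> x /= hx i; [apply: hx; rewrite /= finset.in_setT|move=> _; apply: hx].
rewrite /pr => ->; apply: eq_bigl => i; by rewrite finset.in_setT.
Qed.

Lemma indep_pair {V : Type} (mV : set (set V)) {I : finType} (Z : I -> T -> V)
  (i j : I) (B C : set V) : mutually_indep P mV Z -> mV setT -> i != j -> mV B -> mV C ->
  pr P (Z i @^-1` B `&` Z j @^-1` C) = pr P (Z i @^-1` B) * pr P (Z j @^-1` C).
Proof.
move=> h mT ij mB mC.
pose Bk k := if k == i then B else if k == j then C else setT.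
have hB : forall k, mV (Bk k) by move=> k; rewrite /Bk; case: ifP => _ //; case: ifP.
have := indep_all h hB.
have -> : (fun w => forall k, Bk k (Z k w)) = Z i @^-1` B `&` Z j @^-1` C.
  apply/seteqP; split=> x /= hx.
    split; [have := hx i; by rewrite /Bk eqxx|have := hx j; by rewrite /Bk eqxx eq_sym (negbTE ij)].
  move=> k; rewrite /Bk; case: eqP => [->|_]; first by case: hx.
  by case: eqP => [->|_]; [case: hx|].
move=> ->; rewrite (bigD1 i) //= (bigD1 j) /=; last by rewrite eq_sym.
rewrite big1 ?mulr1 /Bk ?eqxx ?(negbTE (eqP ij)) //; last first.
  by move=> k /andP[/negbTE -> /negbTE ->]; rewrite preimage_setT prT.
by rewrite eq_sym (negbTE ij).
Qed.

Lemma rv_measP (f : T -> R) : rv_meas (@measurable _ R) f <-> measurable_fun setT f.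
Proof.
split=> h.
  by move=> _ B mB; rewrite setTI; apply: h.
by move=> B mB; have := h measurableT B mB; rewrite setTI.
Qed.

Lemma sigmaRV_meas {V} (mV : set (set V)) (f : T -> V) :
  rv_meas mV f -> forall S, sigmaRV mV f S -> measurable S.
Proof. by move=> mf S [B mB <-]; apply: mf. Qed.

Lemma sigmaRV_C {V} (mV : set (set V)) (f : T -> V) S :
  (forall B, mV B -> mV (~` B)) -> sigmaRV mV f S -> sigmaRV mV f (~` S).
Proof. by move=> hC [B mB <-]; exists (~` B) => //; apply: hC. Qed.

Lemma sigmaRV_T {V} (mV : set (set V)) (f : T -> V) : mV setT -> sigmaRV mV f setT.
Proof. by move=> h; exists setT => //; rewrite preimage_setT. Qed.

Lemma sigmaFam_meas {V I} (mV : set (set V)) (Z : I -> T -> V) :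
  (forall i, rv_meas mV (Z i)) -> forall S, sigmaFam mV Z S -> measurable S.
Proof.
move=> h; apply: smallest_sub; first exact: sigma_algebra_measurable.
move=> S [i _ hS]; exact: sigmaRV_meas hS.
Qed.

Lemma sigmaFam_T {V I} (mV : set (set V)) (Z : I -> T -> V) : sigmaFam mV Z setT.
Proof. rewrite /sigmaFam /smallest => X /= [[X0 XC _] _]; have := XC set0 X0; by rewrite setD0. Qed.

End Gen.

Section RealCase.
Context {R : realType} {d : measure_display} {T : measurableType d}
  (P : probability T R) (n : nat).

Lemma real_case (X Rn : 'I_n -> T -> R) :
     (forall i, rv_meas (@measurable _ R) (X i)) ->
     (forall i, rv_meas (@measurable _ R) (Rn i)) ->
     mutually_indep P (@measurable _ R)
       (fun k : 'I_n + 'I_n => match k with inl i => X i | inr i => Rn i end) ->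
     (forall i, MI P (sigmaRV (@measurable _ R) (X i))
                     (sigmaRV (@measurable _ R) (fun w => X i w + Rn i w)) = 0%E) ->
     forall i,
       MI P (sigmaRV (@measurable _ R) (X i))
            (sigmaFam (@measurable _ R)
               (fun o : option 'I_n => match o with
                  | Some j => fun w => X j w + Rn j w
                  | None => fun w => \sum_(j < n) Rn j w end))
       = MI P (sigmaRV (@measurable _ R) (X i))
              (sigmaRV (@measurable _ R) (fun w => \sum_(j < n) X j w)).
Proof.
move=> mX mR hind hMI i.
have mY : forall j, rv_meas (@measurable _ R) (fun w => X j w + Rn j w).
  by move=> j; apply/rv_measP; apply: measurable_realfun.measurable_funD; apply/rv_measP.
have mSR : rv_meas (@measurable _ R) (fun w => \sum_(j < n) Rn j w).
  by apply/rv_measP; apply: measurable_sum => j; apply/rv_measP.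
have mSX : rv_meas (@measurable _ R) (fun w => \sum_(j < n) X j w).
  by apply/rv_measP; apply: measurable_sum => j; apply/rv_measP.
have iXR : forall B C, measurable B -> measurable C ->
    pr P (X i @^-1` B `&` Rn i @^-1` C) = pr P (X i @^-1` B) * pr P (Rn i @^-1` C).
  move=> B C mB mC.
  exact: (indep_pair (i := inl i) (j := inr i) hind measurableT isT mB mC).
have iXY : forall B C, measurable B -> measurable C ->
    pr P (X i @^-1` B `&` (fun w => X i w + Rn i w) @^-1` C) =
    pr P (X i @^-1` B) * pr P ((fun w => X i w + Rn i w) @^-1` C).
  move=> B C mB mC; apply: (MI0_indep (hMI i)).
  - exact: sigmaRV_meas.
  - exact: sigmaRV_meas.
  - by exists B.
  - by exists (~` B) => //; exact: measurableC.
  - by exists C.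
  - by exists (~` C) => //; exact: measurableC.
have triv : forall S, sigmaRV (@measurable _ R) (X i) S ->
    measurable S /\ (pr P S = 0 \/ pr P S = 1).
  move=> S [B mB <-]; split; first exact: mX.
  exact: (X_trivial (mX i) (mR i) (mY i) iXR iXY mB).
set Z := (fun o : option 'I_n => match o with
                  | Some j => fun w => X j w + Rn j w
                  | None => fun w => \sum_(j < n) Rn j w end).
have hZ : forall o, rv_meas (@measurable _ R) (Z o) by case=> [j|] //; exact: mY.
have GT : sigmaFam (@measurable _ R) Z setT by apply: sigmaFam_T.
have e1 := MI_trivial triv (sigmaFam_meas hZ) (sigmaRV_T (X i) (measurableT : measurable (setT : set R))) GT.
have e2 := MI_trivial triv (sigmaRV_meas mSX) (sigmaRV_T (X i) (measurableT : measurable (setT : set R))) (sigmaRV_T (fun w => \sum_(j < n) X j w) (measurableT : measurable (setT : set R))).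
by rewrite e1 e2.
Qed.
End RealCase.

Section ZpCase.
Context {R : realType} {d : measure_display} {T : measurableType d}
  (P : probability T R) (n p : nat) (X Rn : 'I_n -> T -> 'Z_p).
Hypothesis mX : forall i, rv_meas [set: set 'Z_p] (X i).
Hypothesis mR : forall i, rv_meas [set: set 'Z_p] (Rn i).
Hypothesis hind : mutually_indep P [set: set 'Z_p]
       (fun k : 'I_n + 'I_n => match k with inl i => X i | inr i => Rn i end).
Hypothesis hMI : forall i, MI P (sigmaRV [set: set 'Z_p] (X i))
                     (sigmaRV [set: set 'Z_p] (fun w => X i w + Rn i w)) = 0%E.

Local Notation pr := (pr P).
Local Notation Zs := (fun k : 'I_n + 'I_n => match k with inl i => X i | inr i => Rn i end).

Definition VV := ({ffun 'I_n -> 'Z_p} * {ffun 'I_n -> 'Z_p})%type.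
Definition Vf (w : T) : VV := ([ffun j => X j w], [ffun j => Rn j w]).

Lemma mVf1 (v : VV) : measurable (Vf @^-1` [set v]).
Proof.
have -> : Vf @^-1` [set v] = \bigcap_(k in [set: 'I_n + 'I_n])
    Zs k @^-1` [set match k with inl j => v.1 j | inr j => v.2 j end].
  apply/seteqP; split=> w /=.
    by move=> <- [j|j] _ /=; rewrite ffunE.
  move=> h; case: v h => v1 v2 h; congr pair; apply/ffunP => j; rewrite ffunE.
    exact: (h (inl j)).
  exact: (h (inr j)).
apply: fin_bigcap_measurable; first exact: finite_finset.
by move=> [j|j] _; [apply: mX|apply: mR].
Qed.

Lemma mfun (U : finType) (g : T -> U) (h : VV -> U) :
  (forall w, g w = h (Vf w)) -> forall C, measurable (g @^-1` C).
Proof.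
move=> e C.
have -> : g @^-1` C = \bigcup_(v in [set v | C (h v)]) Vf @^-1` [set v].
  apply/seteqP; split=> w /=; first by move=> hw; exists (Vf w) => //=; rewrite -e.
  by move=> [v hv ev]; rewrite e ev.
apply: fin_bigcup_measurable; first exact: finite_finset.
by move=> v _; apply: mVf1.
Qed.

Definition qv (v : VV) := pr (Vf @^-1` [set v]).
Definition al j x := pr (X j @^-1` [set x]).
Definition be j r := pr (Rn j @^-1` [set r]).
Definition ga j y := pr ((fun w => X j w + Rn j w) @^-1` [set y]).

Lemma qvE v : qv v = \prod_j (al j (v.1 j) * be j (v.2 j)).
Proof.
pose B k := [set match k with inl j => v.1 j | inr j => v.2 j end].
have := indep_all hind (B := B) (fun _ => I).
have -> : (fun w => forall k, B k (Zs k w)) = Vf @^-1` [set v].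
  apply/seteqP; split=> w /=.
    move=> h; rewrite /B {B} in h; case: v h => v1 v2 h; congr pair; apply/ffunP => j; rewrite ffunE.
      exact: (h (inl j)).
    exact: (h (inr j)).
  by move=> ev k; rewrite /B -ev; case: k => j /=; rewrite ffunE.
rewrite /qv => ->; rewrite big_sumType /= big_split /=.
by [].
Qed.

Lemma prV (D : pred VV) : pr (Vf @^-1` [set v | D v]) = \sum_(v | D v) qv v.
Proof.
have := pr_pred P D measurableT mVf1.
rewrite setTI => ->; apply: eq_bigr => v _; by rewrite setTI.
Qed.

Lemma al_sum j : \sum_x al j x = 1.
Proof. apply: pr_sum1 => u; exact: mX. Qed.
Lemma be_sum j : \sum_x be j x = 1.
Proof. apply: pr_sum1 => u; exact: mR. Qed.
Lemma ga_sum j : \sum_x ga j x = 1.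
Proof.
apply: pr_sum1 => u; apply: (mfun (h := fun v => v.1 j + v.2 j)) => w.
by rewrite /Vf /= !ffunE.
Qed.

Lemma al_be_ga j x y : al j x * be j (y - x) = al j x * ga j y.
Proof.
have mXj : forall S, sigmaRV [set: set 'Z_p] (X j) S -> measurable S.
  by apply: sigmaRV_meas.
have mYj : forall S, sigmaRV [set: set 'Z_p] (fun w => X j w + Rn j w) S -> measurable S.
  apply: sigmaRV_meas => B _; apply: (mfun (h := fun v => v.1 j + v.2 j)) => w.
  by rewrite /Vf /= !ffunE.
have e1 := MI0_indep (hMI j) mXj mYj (A := X j @^-1` [set x])
   (C := (fun w => X j w + Rn j w) @^-1` [set y]).
have e2 := indep_pair (i := inl j) (j := inr j) (B := [set x]) (C := [set y - x]) hind I isT I I.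
rewrite /al /be /ga -e1; [rewrite /= in e2; rewrite -e2| by exists [set x]|
  by exists (~` [set x])|by exists [set y]|by exists (~` [set y])].
congr pr; apply/seteqP; split=> w /= [hx hy]; split => //.
  by rewrite hx hy addrC subrK.
by rewrite -hy hx addrAC subrr add0r.
Qed.

Definition WW := ({ffun 'I_n -> 'Z_p} * 'Z_p)%type.
Definition Wf (w : T) : WW := ([ffun j => X j w + Rn j w], \sum_(j < n) Rn j w).
Definition Wv (v : VV) : WW := ([ffun j => v.1 j + v.2 j], \sum_(j < n) v.2 j).
Definition SX (w : T) : 'Z_p := \sum_(j < n) X j w.
Definition cy (y : {ffun 'I_n -> 'Z_p}) : R := \prod_j ga j (y j).

Lemma WfE w : Wf w = Wv (Vf w).
Proof.
rewrite /Wf /Wv /Vf /=; congr pair.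
  by apply/ffunP => j; rewrite !ffunE.
by apply: eq_bigr => j _; rewrite ffunE.
Qed.

Lemma SXE w : SX w = \sum_(j < n) (Vf w).1 j.
Proof. by apply: eq_bigr => j _; rewrite ffunE. Qed.

Lemma sum_pair (f : VV -> R) (D : pred VV) :
  \sum_(v | D v) f v = \sum_x \sum_r (if D (x, r) then f (x, r) else 0).
Proof. by rewrite pair_bigA /= big_mkcond; apply: eq_bigr => -[x r] _. Qed.

Lemma prod_be_sum : \sum_(r : {ffun 'I_n -> 'Z_p}) \prod_j be j (r j) = 1.
Proof.
by rewrite -(bigA_distr_bigA (fun j t => be j t)) big1 // => j _; exact: be_sum.
Qed.

Lemma cy_sum : \sum_y cy y = 1.
Proof.
by rewrite /cy -(bigA_distr_bigA (fun j t => ga j t)) big1 // => j _; exact: ga_sum.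
Qed.

Lemma core (i : 'I_n) (E0 : set 'Z_p) (y : {ffun 'I_n -> 'Z_p}) (r : 'Z_p) :
  pr (X i @^-1` E0 `&` Wf @^-1` [set (y, r)]) =
  cy y * pr (X i @^-1` E0 `&` SX @^-1` [set \sum_j y j - r]).
Proof.
have e1 : X i @^-1` E0 `&` Wf @^-1` [set (y, r)] =
   Vf @^-1` [set v : VV | `[< E0 (v.1 i) >] && (Wv v == (y, r))].
  apply/seteqP; split=> w /=; rewrite WfE.
    by move=> [h1 h2]; apply/andP; split; [apply/asboolP; rewrite /Vf /= ffunE|rewrite h2].
  by move=> /andP[/asboolP h1 /eqP h2]; split => //; move: h1; rewrite /Vf /= ffunE.
have e2 : X i @^-1` E0 `&` SX @^-1` [set \sum_j y j - r] =
   Vf @^-1` [set v : VV | `[< E0 (v.1 i) >] && (\sum_j v.1 j == \sum_j y j - r)].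
  apply/seteqP; split=> w /=; rewrite SXE.
    by move=> [h1 h2]; apply/andP; split; [apply/asboolP; rewrite /Vf /= ffunE|rewrite h2].
  by move=> /andP[/asboolP h1 /eqP h2]; split => //; move: h1; rewrite /Vf /= ffunE.
rewrite e1 e2 !prV !sum_pair mulr_sumr; apply: eq_bigr => x _.
transitivity (if `[< E0 (x i) >] && (\sum_j x j == \sum_j y j - r)
              then (\prod_j al j (x j)) * cy y else 0).
  set r0 : {ffun 'I_n -> 'Z_p} := [ffun j => y j - x j].
  rewrite (bigD1 r0) //= big1 ?addr0; last first.
    move=> rr /negbTE nr; case: ifP => // /andP[_ /eqP].
    rewrite /Wv /= => -[/ffunP hy _]; move: nr; rewrite /r0.
    suff -> : rr = [ffun j => y j - x j] by rewrite eqxx.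
    by apply/ffunP => j; rewrite ffunE -hy ffunE addrC addKr.
  have hW : [ffun j => x j + r0 j] = y.
    by apply/ffunP => j; rewrite !ffunE addrC subrK.
  have hS : \sum_j r0 j = \sum_j y j - \sum_j x j.
    by rewrite -sumrB; apply: eq_bigr => j _; rewrite ffunE.
  rewrite /Wv /= hW hS xpair_eqE eqxx /=.
  have -> : (\sum_j y j - \sum_j x j == r) = (\sum_j x j == \sum_j y j - r).
    by rewrite subr_eq [in RHS]eq_sym subr_eq addrC.
  case: ifP => // _; rewrite qvE /cy -big_split /=; apply: eq_bigr => j _.
  by rewrite /= ffunE al_be_ga.
case: ifP => hc.
  rewrite mulrC; congr (_ * _).
  transitivity (\sum_(rr : {ffun 'I_n -> 'Z_p}) (\prod_j al j (x j)) * \prod_j be j (rr j)).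
    by rewrite -mulr_sumr prod_be_sum mulr1.
  by apply: eq_bigr => rr _; rewrite qvE big_split.
by rewrite big1 ?mulr0 // => rr _ /=; rewrite hc.
Qed.

Lemma core' (i : 'I_n) (E0 : set 'Z_p) (w : WW) :
  pr (X i @^-1` E0 `&` Wf @^-1` [set w]) =
  cy w.1 * pr (X i @^-1` E0 `&` SX @^-1` [set \sum_j w.1 j - w.2]).
Proof. by case: w => y r; exact: core. Qed.

Local Notation Z := (fun o : option 'I_n => match o with
                  | Some j => fun w => X j w + Rn j w
                  | None => fun w => \sum_(j < n) Rn j w end).

Lemma mWf C : measurable (Wf @^-1` C).
Proof. by apply: (mfun (h := Wv)) => w; rewrite WfE. Qed.

Lemma mSX C : measurable (SX @^-1` C).
Proof. by apply: (mfun (h := fun v => \sum_j v.1 j)) => w; rewrite SXE. Qed.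

Lemma Gsub S : sigmaFam [set: set 'Z_p] Z S -> exists C, S = Wf @^-1` C.
Proof.
move=> hS.
pose W := [set A : set T | exists C, A = Wf @^-1` C].
suff : W S by [].
apply: (smallest_sub _ _ hS).
  split.
  - by exists set0; rewrite preimage_set0.
  - move=> A [C ->]; exists (~` C); apply/seteqP; split=> w /=; by [case|].
  - move=> F hF; have [f hf] := choice hF.
    exists (\bigcup_k f k); apply/seteqP; split=> w /=.
      by move=> [k _]; rewrite hf => h; exists k.
    by move=> [k _ h]; exists k => //; rewrite hf.
move=> A0 []; case=> [j|] _ [B _ <-] /=.
  exists [set w : WW | B (w.1 j)]; apply/seteqP; split=> w /=; by rewrite ffunE.
by exists [set w : WW | B w.2].
Qed.

Lemma HsubG S : sigmaRV [set: set 'Z_p] SX S -> sigmaFam [set: set 'Z_p] Z S.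
Proof.
move=> [B _ <-].
set G0 := \bigcup_(i in [set: option 'I_n]) sigmaRV [set: set 'Z_p] (Z i).
suff : (G0.-sigma).-measurable (SX @^-1` B : set (g_sigma_algebraType G0)) by [].
have -> : SX @^-1` B = \bigcup_(w in [set w : WW | B (\sum_j w.1 j - w.2)]) Wf @^-1` [set w].
  apply/seteqP; split=> t /=.
    move=> h; exists (Wf t) => //=.
    rewrite /Wf /=; have -> : \sum_j [ffun j => X j t + Rn j t] j - \sum_j Rn j t = SX t.
      under eq_bigr do rewrite ffunE.
      by rewrite big_split /= addrK.
    exact: h.
  move=> [w hw ht]; rewrite -ht in hw; move: hw.
  rewrite /Wf /=; have -> : \sum_j [ffun j => X j t + Rn j t] j - \sum_j Rn j t = SX t.
    under eq_bigr do rewrite ffunE.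
    by rewrite big_split /= addrK.
  by [].
apply: fin_bigcup_measurable; first exact: finite_finset.
move=> [y r] _.
have -> : Wf @^-1` [set (y, r)] = \bigcap_(o in [set: option 'I_n])
    Z o @^-1` [set match o with Some j => y j | None => r end].
  apply/seteqP; split=> t /=.
    by move=> [<- <-] [j|] _ /=; rewrite ?ffunE.
  move=> h; congr pair; last exact: (h None).
  by apply/ffunP => j; rewrite ffunE; exact: (h (Some j)).
apply: fin_bigcap_measurable; first exact: finite_finset.
move=> o _; apply: sub_gen_smallest; exists o => //.
by exists [set match o with Some j => y j | None => r end].
Qed.

Lemma regroup m' (B : 'I_m' -> set T) (C : 'I_m' -> set WW) (g : WW -> R) :
  (forall l, B l = Wf @^-1` C l) ->
  (forall k l, k != l -> B k `&` B l = set0) ->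
  \bigcup_(k in [set: 'I_m']) B k = [set: T] ->
  (forall w, (forall t, Wf t <> w) -> g w = 0) ->
  \sum_l \sum_(w | `[< C l w >]) g w = \sum_w g w.
Proof.
move=> hB hdis hcov g0.
under eq_bigr do rewrite big_mkcond.
rewrite exchange_big; apply: eq_bigr => w _.
case: (pselect (exists t, Wf t = w)) => [[t ht]|nt]; last first.
  have gw : g w = 0 by apply: g0 => t ht; apply: nt; exists t.
  by rewrite gw big1 // => l _; case: ifP.
have : (\bigcup_(k in [set: 'I_m']) B k) t by rewrite hcov.
move=> [l0 _ hl0].
have Cl0 : C l0 w by move: hl0; rewrite hB /= ht.
rewrite (bigD1 l0) //= big1 ?addr0.
  by case: asboolP.
move=> l nl; case: asboolP => // hC.
have : (B l `&` B l0) t by split; rewrite hB /= ht.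
by rewrite hdis.
Qed.

Lemma mi_scale (c a q b : R) : 0 <= c -> mi_term (c * a) q (c * b) = c * mi_term a q b.
Proof.
move=> c0; rewrite /mi_term; have [->|cn0] := eqVneq c 0; first by rewrite !mul0r eqxx.
rewrite mulf_eq0 (negbTE cn0) /=; case: ifP => _; first by rewrite mulr0.
rewrite -mulrA; congr (_ * (_ * _)); congr ln.
have e : q * (c * b) = c * (q * b) by rewrite mulrCA.
by rewrite e invfM mulrACA mulfV // mul1r.
Qed.

Lemma perk (i : 'I_n) (E0 : set 'Z_p) m' (B : 'I_m' -> set T) :
  fpartition (sigmaFam [set: set 'Z_p] Z) B ->
  \sum_(l < m') mi_term (pr (X i @^-1` E0 `&` B l)) (pr (X i @^-1` E0)) (pr (B l)) <=
  \sum_(s : 'Z_p) mi_term (pr (X i @^-1` E0 `&` SX @^-1` [set s])) (pr (X i @^-1` E0))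
                          (pr (SX @^-1` [set s])).
Proof.
move=> [hBG [hdis hcov]].
have [C hCe] := choice (fun l => Gsub (hBG l)).
set A := X i @^-1` E0.
have mA : measurable A by apply: mX.
pose a w := pr (A `&` Wf @^-1` [set w]).
pose b w := pr (Wf @^-1` [set w]).
have ea : forall l, pr (A `&` B l) = \sum_(w | `[< C l w >]) a w.
  move=> l; rewrite hCe; have := pr_pred P (fun w => `[< C l w >]) mA (fun u => mWf [set u]).
  have -> : Wf @^-1` [set u | `[< C l u >]] = Wf @^-1` C l.
    by apply/seteqP; split=> t /=; rewrite asboolE.
  by [].
have eb : forall l, pr (B l) = \sum_(w | `[< C l w >]) b w.
  move=> l; rewrite hCe; have := pr_pred P (fun w => `[< C l w >]) measurableT (fun u => mWf [set u]).
  have -> : Wf @^-1` [set u | `[< C l u >]] = Wf @^-1` C l.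
    by apply/seteqP; split=> t /=; rewrite asboolE.
  rewrite setTI => ->; apply: eq_bigr => w _; by rewrite setTI.
apply: (@le_trans _ _ (\sum_(l < m') \sum_(w | `[< C l w >]) mi_term (a w) (pr A) (b w))).
  apply: ler_sum => l _; rewrite ea eb; apply: logsum.
  - by move=> w; apply: pr_ge0; apply: measurableI => //; exact: mWf.
  - by move=> w; apply: pr_le; [apply: measurableI => //; exact: mWf|exact: mWf|exact: subIsetr].
  - by move=> w; apply: pr_le; [apply: measurableI => //; exact: mWf|exact: mA|exact: subIsetl].
rewrite (regroup hCe hdis hcov); last first.
  move=> w hw; rewrite /a.
  have -> : A `&` Wf @^-1` [set w] = set0.
    by apply/seteqP; split=> t //= [_ ht]; exact: (hw t ht).
  by rewrite pr0 /mi_term eqxx.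
have -> : \sum_w mi_term (a w) (pr A) (b w) =
          \sum_y \sum_r mi_term (a (y, r)) (pr A) (b (y, r)).
  by rewrite pair_bigA; apply: eq_bigr => -[].
set h := fun s : 'Z_p => mi_term (pr (A `&` SX @^-1` [set s])) (pr A) (pr (SX @^-1` [set s])).
have hg : forall y r, mi_term (a (y, r)) (pr A) (b (y, r)) = cy y * h (\sum_j y j - r).
  move=> y r; rewrite /a /b /h.
  have eb' : pr (Wf @^-1` [set (y, r)]) = cy y * pr (SX @^-1` [set \sum_j y j - r]).
    by have := core' i setT (y, r); rewrite preimage_setT !setTI.
  rewrite eb' /A (core' i E0) /= mi_scale //.
  by apply: prodr_ge0 => j _; apply: pr_ge0; apply: (mfun (h := fun v => v.1 j + v.2 j)) => w; rewrite /Vf /= !ffunE.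
under eq_bigr do under eq_bigr do rewrite hg.
have -> : \sum_(y : {ffun 'I_n -> 'Z_p}) \sum_(r : 'Z_p) cy y * h (\sum_j y j - r) =
          \sum_(y : {ffun 'I_n -> 'Z_p}) cy y * \sum_(s : 'Z_p) h s.
  apply: eq_bigr => y _; rewrite -mulr_sumr; congr (_ * _).
  rewrite [RHS](reindex_inj (h := fun r => \sum_j y j - r)) //.
  by move=> u v huv; rewrite -(opprK u) -(opprK v); congr (- _); apply: (addrI (\sum_j y j)).
by rewrite -mulr_suml cy_sum mul1r.
Qed.

Lemma MI_mono (F G1 G2 : set (set T)) : G1 `<=` G2 -> (MI P F G1 <= MI P F G2)%E.
Proof.
move=> sub; apply: ereal_sup_le => r [m [m' [A [B [hA [hB1 hB2] ->]]]]].
by exists m, m', A, B; split => //; split => // l; apply: sub.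
Qed.

Lemma zp_main (i : 'I_n) :
  MI P (sigmaRV [set: set 'Z_p] (X i)) (sigmaFam [set: set 'Z_p] Z) =
  MI P (sigmaRV [set: set 'Z_p] (X i)) (sigmaRV [set: set 'Z_p] SX).
Proof.
apply/eqP; rewrite eq_le; apply/andP; split; last first.
  apply: MI_mono => S; exact: HsubG.
apply: ge_ereal_sup => r [m [m' [A [B [hA hB ->]]]]].
have [E hE] := choice (fun k => match hA.1 k with ex_intro2 B0 _ e => ex_intro _ B0 e end).
pose B' : 'I_(Zp_trunc p).+2 -> set T := fun s => SX @^-1` [set s].
have hB' : fpartition (sigmaRV [set: set 'Z_p] SX) B'.
  split; [|split].
  - by move=> s; exists [set s].
  - move=> s t st; apply/seteqP; split=> w //= [h1 h2].
    by move: st; rewrite -h1 -h2 eqxx.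
  - by apply/seteqP; split=> w // _; exists (SX w).
apply: (le_trans _ (MI_ub P hA hB')); rewrite lee_fin /psum.
apply: ler_sum => k _; rewrite -(hE k); exact: perk.
Qed.

End ZpCase.

Unset Implicit Arguments. Set Strict Implicit.

(* X i = X_{i+1}, Rn i = R_{i+1}; the joint variable
   (X_1+R_1, ..., X_n+R_n, sum_j R_j) is the family indexed by option 'I_n. *)
Theorem mainTheorem4 (R : realType) (d : measure_display) (T : measurableType d)
  (P : probability T R) (n : nat) :
  (forall (X Rn : 'I_n -> T -> R),
     (forall i, rv_meas (@measurable _ R) (X i)) ->
     (forall i, rv_meas (@measurable _ R) (Rn i)) ->
     mutually_indep P (@measurable _ R)
       (fun k : 'I_n + 'I_n => match k with inl i => X i | inr i => Rn i end) ->
     (forall i, MI P (sigmaRV (@measurable _ R) (X i))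
                     (sigmaRV (@measurable _ R) (fun w => X i w + Rn i w)) = 0%E) ->
     forall i,
       MI P (sigmaRV (@measurable _ R) (X i))
            (sigmaFam (@measurable _ R)
               (fun o : option 'I_n => match o with
                  | Some j => fun w => X j w + Rn j w
                  | None => fun w => \sum_(j < n) Rn j w end))
       = MI P (sigmaRV (@measurable _ R) (X i))
              (sigmaRV (@measurable _ R) (fun w => \sum_(j < n) X j w)))
  /\
  (forall (p : nat), (1 < p)%N ->
   forall (X Rn : 'I_n -> T -> 'Z_p),
     (forall i, rv_meas [set: set 'Z_p] (X i)) ->
     (forall i, rv_meas [set: set 'Z_p] (Rn i)) ->
     mutually_indep P [set: set 'Z_p]
       (fun k : 'I_n + 'I_n => match k with inl i => X i | inr i => Rn i end) ->
     (forall i, MI P (sigmaRV [set: set 'Z_p] (X i))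
                     (sigmaRV [set: set 'Z_p] (fun w => X i w + Rn i w)) = 0%E) ->
     forall i,
       MI P (sigmaRV [set: set 'Z_p] (X i))
            (sigmaFam [set: set 'Z_p]
               (fun o : option 'I_n => match o with
                  | Some j => fun w => X j w + Rn j w
                  | None => fun w => \sum_(j < n) Rn j w end))
       = MI P (sigmaRV [set: set 'Z_p] (X i))
              (sigmaRV [set: set 'Z_p] (fun w => \sum_(j < n) X j w))).
Proof.
split.
- move=> X Rn mX mR hind hMI i; exact: (real_case mX mR hind hMI i).
- move=> p _ X Rn mX mR hind hMI i; exact: (zp_main mX mR hind hMI i).
Qed.
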